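(* Let $x=[x_1,\dots,x_N]\in S_N$ and let $(x_p,x_q,x_r)$, $p<q<r$, be a minimally chosen $[231]$-pattern in $x$. Let $x'$ be the permutation obtained from $x$ by exchanging the entries in positions $p$ and $q$, i.e. $x'=[x_1,\dots,x_{p-1},x_q,x_{p+1},\dots,x_{q-1},x_p,x_{q+1},\dots,x_N]$. Then $\phi(\pi_{x'})=\phi(\pi_x)$, and $(x'_p,x'_q,x'_r)$ is a left-minimal $[321]$-pattern in $x'$.
   Context: Permutations are in one-line notation and composed as functions. $H_0(S_N)$ is generated by $\pi_1,\dots,\pi_{N-1}$ with $\pi_i^2=\pi_i$, $\pi_i\pi_j=\pi_j\pi_i$ for $|i-j|\ge2$, $\pi_i\pi_{i+1}\pi_i=\pi_{i+1}\pi_i\pi_{i+1}$; $\pi_w=\pi_{i_1}\cdots\pi_{i_k}$ for a reduced word $w=s_{i_1}\cdots s_{i_k}$. $\phi$ is the quotient morphism from $H_0(S_N)$ to its quotient by the relations $\pi_i\pi_{i+1}\pi_i=\pi_i\pi_{i+1}$ ($1\le i\le N-2$), sending $\pi_i\mapsto\pi_i$ (this quotient is isomorphic to $\operatorname{NDPF}_N$). A $[231]$-pattern is a triple of positions $p<q<r$ with $x_r<x_p<x_q$; its width is $(r-p,q-p)$, and it is minimally chosen if its width is lexicographically minimal among all $[231]$-patterns of $x$. A $[321]$-pattern $(x_p,x_q,x_r)$ ($p<q<r$, $x_p>x_q>x_r$) is left minimal if $x_t<x_r$ for all $t$ with $p<t<q$ and $x_s>x_q$ for all $s$ with $q<s<r$.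 *)

(* Defs.v *)
From mathcomp Require Import all_boot.
Set Implicit Arguments. Unset Strict Implicit. Unset Printing Implicit Defensive.

(* A permutation x of {1..N} is given in one-line notation as a list
   x = [:: x_1; ...; x_N] with perm_eq x (iota 1 N).  Positions are 1-based. *)

Definition xat (x : seq nat) (p : nat) : nat := nth 0 x p.-1.

Definition swap_pos (x : seq nat) (p q : nat) : seq nat :=
  [seq xat x (if k == p then q else if k == q then p else k) | k <- iota 1 (size x)].

(* The permutation s_{i1} ... s_{ik} (composition as functions) in one-line
   notation: x o s_i exchanges positions i and i+1 of x, so we start from the
   identity and swap positions i1, i2, ..., ik successively. *)
Definition word_perm (N : nat) (w : seq nat) : seq nat :=
  foldl (fun s i => swap_pos s i i.+1) (iota 1 N) w.

(* Coxeter length = number of inversions *)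
Definition inversions (x : seq nat) : nat :=
  #|[set pq : 'I_(size x).+1 * 'I_(size x).+1 |
      [&& 0 < pq.1, pq.1 < pq.2 & xat x pq.2 < xat x pq.1]]|.

Definition reduced_word (N : nat) (x w : seq nat) : Prop :=
  [/\ all (fun i => (1 <= i) && (i <= N.-1)) w,
      word_perm N w = x & size w = inversions x].

(* Defining relations of H_0(S_N) together with the extra NDPF relations
   pi_i pi_{i+1} pi_i = pi_i pi_{i+1}, on words over {1..N-1}. *)
Inductive ndpf_basic (N : nat) : seq nat -> seq nat -> Prop :=
| nb_idem i : 1 <= i <= N.-1 -> ndpf_basic N [:: i; i] [:: i]
| nb_comm i j : 1 <= i <= N.-1 -> 1 <= j <= N.-1 -> j.+2 <= i ->
    ndpf_basic N [:: i; j] [:: j; i]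
| nb_braid i : 1 <= i -> i.+1 <= N.-1 ->
    ndpf_basic N [:: i; i.+1; i] [:: i.+1; i; i.+1]
| nb_ndpf i : 1 <= i -> i <= N - 2 ->
    ndpf_basic N [:: i; i.+1; i] [:: i; i.+1].

(* The monoid congruence generated by these relations; two words are
   equivalent iff they have the same image under
   (free monoid) -> H_0(S_N) --phi--> H_0(S_N)/(extra relations). *)
Inductive ndpf_equiv (N : nat) : seq nat -> seq nat -> Prop :=
| ne_refl w : ndpf_equiv N w w
| ne_sym u v : ndpf_equiv N u v -> ndpf_equiv N v u
| ne_trans u v w : ndpf_equiv N u v -> ndpf_equiv N v w -> ndpf_equiv N u w
| ne_ctx u a b v : ndpf_basic N a b -> ndpf_equiv N (u ++ a ++ v) (u ++ b ++ v).

Definition phi_pi_eq (N : nat) (x y : seq nat) : Prop :=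
  forall w w', reduced_word N x w -> reduced_word N y w' -> ndpf_equiv N w w'.

Definition is231 (x : seq nat) (p q r : nat) : bool :=
  [&& 1 <= p, p < q, q < r, r <= size x & xat x r < xat x p < xat x q].

Definition min231 (x : seq nat) (p q r : nat) : Prop :=
  is231 x p q r /\
  forall p' q' r', is231 x p' q' r' ->
    (r - p < r' - p') || ((r - p == r' - p') && (q - p <= q' - p')).

Definition is321 (x : seq nat) (p q r : nat) : bool :=
  [&& 1 <= p, p < q, q < r, r <= size x & xat x r < xat x q < xat x p].

Definition left_min321 (x : seq nat) (p q r : nat) : Prop :=
  [/\ is321 x p q r,
      (forall t, p < t < q -> xat x t < xat x r) &
      (forall s, q < s < r -> xat x q < xat x s)].

(* Main.v *)
Require Import Defs.
From mathcomp Require Import all_boot zify.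


Definition tau (p q k : nat) := if k == p then q else if k == q then p else k.

Lemma size_swap x p q : size (swap_pos x p q) = size x.
Proof. by rewrite /swap_pos size_map size_iota. Qed.

Lemma xat_swap x p q k : 1 <= k <= size x ->
  xat (swap_pos x p q) k = xat x (tau p q k).
Proof.
move=> /andP [k1 k2]; rewrite {1}/xat /swap_pos (nth_map 0) ?size_iota; last lia.
by rewrite nth_iota; last lia; rewrite /tau; have -> : 1 + k.-1 = k by lia.
Qed.

Lemma nth_dec (a c b : seq nat) u v k :
  nth 0 (a ++ u :: c ++ v :: b) k =
  if k < size a then nth 0 a k else if k == size a then u
  else if k < size a + size c + 1 then nth 0 c (k - size a - 1)
  else if k == size a + size c + 1 then v else nth 0 b (k - size a - size c - 2).
Proof.
rewrite nth_cat; case: ltnP => // h1.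
have [m ->] : exists m, k = size a + m by exists (k - size a); lia.
rewrite addKn; case: m => [|m] /=; first by rewrite addn0 eqxx.
rewrite ifF; last lia.
rewrite nth_cat; case: ltnP => h3.
  by rewrite ifT; [congr nth; lia | lia].
have [n ->] : exists n, m = size c + n by exists (m - size c); lia.
rewrite addKn ifF; last lia.
case: n => [|n] /=; first by rewrite ifT //; lia.
by rewrite ifF; [congr nth; lia | lia].
Qed.

Section Dec.
Variables (x : seq nat) (p q : nat).
Hypothesis hp : 1 <= p. Hypothesis hpq : p < q. Hypothesis hq : q <= size x.
Let a := take p.-1 x.
Let u := nth 0 x p.-1.
Let c := take (q - p).-1 (drop p x).
Let v := nth 0 x q.-1.
Let b := drop q x.

Lemma decE : x = a ++ u :: c ++ v :: b.
Proof.
rewrite /a /u /c /v /b.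
rewrite -{1}(cat_take_drop p.-1 x); congr (_ ++ _).
rewrite (drop_nth 0); last lia. have -> : p.-1.+1 = p by lia.
congr (_ :: _). rewrite -{1}(cat_take_drop (q-p).-1 (drop p x)); congr (_ ++ _).
rewrite drop_drop (drop_nth 0); last lia.
have -> : (q - p).-1 + p = q.-1 by lia.
by have -> : q.-1.+1 = q by lia.
Qed.

Lemma size_a : size a = p.-1.
Proof. rewrite /a size_takel //; lia. Qed.
Lemma size_c : size c = (q - p).-1.
Proof. rewrite /c size_takel // size_drop; lia. Qed.

Lemma swapE : swap_pos x p q = a ++ v :: c ++ u :: b.
Proof.
have Hs : size x = size (a ++ u :: c ++ v :: b) by rewrite -decE.
apply: (@eq_from_nth _ 0).
  by rewrite size_swap Hs !size_cat /= !size_cat.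
move=> k; rewrite size_swap => hk.
have := xat_swap x p q (k.+1); rewrite /xat /= => ->; last lia.
rewrite /tau; case: eqVneq => e1; [|case: eqVneq => e2];
rewrite {1}decE !nth_dec size_a size_c !eqn_leq;
do ![case: ifP => ?]; try (by []); try (by congr nth; lia); lia.
Qed.
End Dec.


Section Mon.
Variable N : nat.
Local Notation E := (ndpf_equiv N).
Definition okl (i : nat) := (1 <= i) && (i <= N.-1).

Lemma E_ctx s u v t : E u v -> E (s ++ u ++ t) (s ++ v ++ t).
Proof.
elim=> {u v} [w|u v _ IH|u v w _ IH1 _ IH2|u0 a b v0 H].
- exact: ne_refl.
- exact: ne_sym.
- exact: ne_trans IH1 IH2.
- have e1 : forall z, s ++ (u0 ++ z ++ v0) ++ t = (s ++ u0) ++ z ++ (v0 ++ t)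
    by move=> z; rewrite !catA.
  rewrite !e1; exact: ne_ctx.
Qed.
Lemma E_l s u v : E u v -> E (s ++ u) (s ++ v).
Proof. by move=> H; have := @E_ctx s u v [::] H; rewrite !cats0. Qed.
Lemma E_r u v t : E u v -> E (u ++ t) (v ++ t).
Proof. by move=> H; have := @E_ctx [::] u v t H. Qed.
Lemma E_b a b : ndpf_basic N a b -> E a b.
Proof. by move=> H; have := ne_ctx [::] [::] H; rewrite /= !cats0. Qed.
Lemma E_t u v w : E u v -> E v w -> E u w.
Proof. exact: ne_trans. Qed.
Lemma E_s u v : E u v -> E v u.
Proof. exact: ne_sym. Qed.
Lemma E_e u v : u = v -> E u v.
Proof. by move=> ->; exact: ne_refl. Qed.

Arguments E_t {u v w}. Arguments E_s {u v}. Arguments E_e {u v}.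
Arguments E_l s {u v}. Arguments E_r {u v} t. Arguments E_b {a b}.

Definition far l i := (l.+2 <= i) || (i.+2 <= l).

Lemma comm1 l i : okl l -> okl i -> far l i -> E [:: l; i] [:: i; l].
Proof.
rewrite /okl /far => /andP [l1 l2] /andP [i1 i2] /orP [h|h].
- apply: E_s; apply: E_b; apply: nb_comm => //; lia.
- apply: E_b; apply: nb_comm => //; lia.
Qed.

Lemma commw u i : okl i -> all okl u -> all (fun l => far l i) u ->
  E (u ++ [:: i]) (i :: u).
Proof.
move=> hi; elim: u => [|l u IH] /=; first by move=> *; exact: ne_refl.
move=> /andP [hl hu] /andP [fl fu].
apply: E_t (_ : E (l :: i :: u) _).
  by apply: (E_l [:: l]); exact: IH.
by apply: (@E_r [:: l; i] [:: i; l] u); exact: comm1.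
Qed.

Lemma all_iota (P : pred nat) a n : (forall l, a <= l < a + n -> P l) -> all P (iota a n).
Proof. move=> H; apply/allP => l; rewrite mem_iota; exact: H. Qed.

Lemma absR a n k : 1 <= a -> a + n <= N -> a <= k < a + n ->
  E (iota a n ++ [:: k]) (iota a n).
Proof.
elim: n a => [|n IH] a ha han hk; first lia.
rewrite /=.
case: (ltnP a k) => hak.
  by apply: (E_l [:: a]); apply: IH; lia.
have -> : k = a by lia.
case: n IH han hk => [|n] IH han hk.
  by apply: E_b; apply: nb_idem; lia.
rewrite /=.
apply: E_t (_ : E [:: a, a.+1, a & iota a.+2 n] _).
  apply: (E_l [:: a; a.+1]); apply: commw.
  - rewrite /okl; lia.
  - apply: all_iota => l hl; rewrite /okl; lia.
  - apply: all_iota => l hl; rewrite /far; lia.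
apply: (@E_r [:: a; a.+1; a] [:: a; a.+1]).
apply: E_b; apply: nb_ndpf; lia.
Qed.

Lemma absL a n k : 1 <= a -> a + n <= N -> a <= k < a + n ->
  E (k :: iota a n) (iota a n).
Proof.
elim: n k => [|n IH] k ha han hk; first lia.
have -> : iota a n.+1 = iota a n ++ [:: a + n] by rewrite -addn1 iotaD.
case: (ltnP k (a + n)) => hkn.
  by apply: (@E_r (k :: iota a n)); apply: IH; lia.
have -> : k = a + n by lia.
case: n IH han hk hkn => [|n] IH han hk hkn.
  by rewrite addn0 /=; apply: E_b; apply: nb_idem; lia.
have -> : iota a n.+1 = iota a n ++ [:: a + n] by rewrite -addn1 iotaD.
rewrite -!catA /=.
apply: E_t (_ : E (iota a n ++ [:: a + n.+1; a + n; a + n.+1]) _).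
  have H' : E (iota a n ++ [:: a + n.+1]) (a + n.+1 :: iota a n).
    apply: commw.
    - rewrite /okl; lia.
    - apply: all_iota => l hl; rewrite /okl; lia.
    - apply: all_iota => l hl; rewrite /far; lia.
  have := @E_r _ _ [:: a + n; a + n.+1] (E_s H').
  by rewrite -catA.
apply: E_l.
apply: E_t (_ : E [:: a + n; a + n.+1; a + n] _).
  have -> : a + n.+1 = (a + n).+1 by lia.
  apply: E_s; apply: E_b; apply: nb_braid; lia.
have -> : a + n.+1 = (a + n).+1 by lia.
apply: E_b; apply: nb_ndpf; lia.
Qed.

Lemma absLw u a n : 1 <= a -> a + n <= N -> all (fun l => a <= l < a + n) u ->
  E (u ++ iota a n) (iota a n).
Proof.
move=> ha han; elim: u => [|l u IH] /=; first by move=> _; exact: ne_refl.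
move=> /andP [hl hu].
apply: E_t (_ : E (l :: iota a n) _); first by apply: (E_l [:: l]); exact: IH.
exact: absL.
Qed.

Lemma absRw u a n : 1 <= a -> a + n <= N -> all (fun l => a <= l < a + n) u ->
  E (iota a n ++ u) (iota a n).
Proof.
move=> ha han; elim: u => [|l u IH] /=; first by move=> _; rewrite cats0; exact: ne_refl.
move=> /andP [hl hu].
rewrite -cat1s catA.
apply: E_t (_ : E (iota a n ++ u) _); last exact: IH.
by apply: E_r; exact: absR.
Qed.

Definition run j a := iota a (j - a).
Fixpoint nf (g : nat -> nat) n :=
  if n is n'.+1 then run n (g n) ++ nf g n' else [::].

Lemma nfS g n : nf g n.+1 = run n.+1 (g n.+1) ++ nf g n.
Proof. by []. Qed.

Lemma nf_ext g h n : (forall j, 1 <= j <= n -> g j = h j) -> nf g n = nf h n.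
Proof.
elim: n => [|n IH] H //=.
rewrite H; last lia. by rewrite IH // => j hj; apply: H; lia.
Qed.

Lemma nf_id n : nf id n = [::].
Proof. by elim: n => //= n ->; rewrite /run subnn. Qed.

Lemma nf_all g n : (forall j, 1 <= j -> 1 <= g j) -> n <= N.+1 ->
  all (fun l => (1 <= l) && (l < n)) (nf g n).
Proof.
move=> Hg; elim: n => [|n IH] hn //=.
rewrite all_cat; apply/andP; split.
  apply: all_iota => l hl; have := Hg n.+1; lia.
by apply: sub_all (IH _) ; [move=> l; lia | lia].
Qed.

Definition piN i k := if k == i.+1 then i else k.

Lemma nf_step g i : 1 <= i -> i < N ->
  (forall j, 1 <= j -> 1 <= g j <= j) -> g i <= g i.+1 ->
  E (nf g N ++ [:: i]) (nf (fun k => g (piN i k)) N).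
Proof.
move=> i1 iN Hg Hm.
have Hg1 : forall j, 1 <= j -> 1 <= g j by move=> j hj; have := Hg j hj; lia.
suff : forall n, i < n <= N -> E (nf g n ++ [:: i]) (nf (fun k => g (piN i k)) n).
  by apply; lia.
elim=> [|n IH] hn; first lia.
case: (ltnP i.+1 n.+1) => hin.
  rewrite !nfS -catA /=.
  have -> : piN i n.+1 = n.+1 by rewrite /piN ifF //; lia.
  by apply: E_l; apply: IH; lia.
have ei : n = i by lia. subst n.
case: i i1 iN Hm IH hn hin => [|i] // i1 iN Hm IH hn hin.
rewrite !nfS /=.
have -> : piN i.+1 i.+2 = i.+1 by rewrite /piN eqxx.
have -> : piN i.+1 i.+1 = i.+1 by rewrite /piN ifF //; lia.
set a := g i.+1. set b := g i.+2.
rewrite (@nf_ext (fun k => g (piN i.+1 k)) g i); last first.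
  by move=> j hj; rewrite /piN ifF //; lia.
have ha := Hg i.+1 isT. have hb := Hg i.+2 isT.
apply: E_t (_ : E (run i.+2 b ++ run i.+1 a ++ [:: i.+1] ++ nf g i) _).
  rewrite -!catA; apply: E_l; apply: E_l; apply: commw.
  - rewrite /okl; lia.
  - apply: sub_all (@nf_all g i Hg1 _); [move=> l; rewrite /okl; lia | lia].
  - apply: sub_all (@nf_all g i Hg1 _); [move=> l; rewrite /far; lia | lia].
have er : run i.+1 a ++ [:: i.+1] = run i.+2 a.
  rewrite /run; have -> : i.+2 - a = (i.+1 - a) + 1 by lia.
  by rewrite iotaD; congr (_ ++ [:: _]); lia.
rewrite (catA (run i.+1 a)) er !catA.
apply: E_r.
apply: E_t (_ : E (run i.+2 a) _).
  apply: absLw; [lia|lia|].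
  apply: all_iota => l hl; lia.
apply: E_s; apply: absRw; [lia|lia|].
apply: all_iota => l hl; lia.
Qed.

Definition F (w : seq nat) (k : nat) := foldr piN k w.

Lemma F_props w : all okl w ->
  (forall j, 1 <= j -> 1 <= F w j <= j) /\ (forall j k, j <= k -> F w j <= F w k).
Proof.
elim: w => [|i w IH] /=; first by split => *; lia.
move=> /andP [hi /IH [H1 H2]]; split.
  move=> j hj; have := H1 j hj; rewrite /piN; case: eqP; rewrite /okl in hi; lia.
move=> j k hjk; have := H2 j k hjk; have := H1 j; have := H1 k.
rewrite /piN; case: eqP; case: eqP; rewrite /okl in hi; lia.
Qed.

Lemma nf_F w : all okl w -> E w (nf (F w) N).
Proof.
elim/last_ind: w => [|w i IH].
  move=> _; have -> : nf (F [::]) N = [::] by rewrite (@nf_ext _ id N) ?nf_id.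
  exact: ne_refl.
rewrite all_rcons => /andP [hi hw].
have [H1 H2] := @F_props w hw.
rewrite -cats1.
apply: E_t (_ : E (nf (F w) N ++ [:: i]) _); first by apply: E_r; exact: IH.
apply: (@E_t _ (nf (fun k => F w (piN i k)) N)); last first.
  by apply: E_e; apply: nf_ext => j _; rewrite /F foldr_cat.
apply: nf_step => //; rewrite /okl in hi; try lia.
apply: H2; lia.
Qed.

End Mon.


Lemma invE x n : size x = n -> inversions x =
  #|[set pq : 'I_n.+1 * 'I_n.+1 | [&& 0 < pq.1, pq.1 < pq.2 & xat x pq.2 < xat x pq.1]]|.
Proof. by move=> <-. Qed.

Lemma tauP i k : (k = i /\ tau i i.+1 k = i.+1) \/ (k = i.+1 /\ tau i i.+1 k = i) \/
  (k <> i /\ k <> i.+1 /\ tau i i.+1 k = k).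
Proof.
rewrite /tau; case: (k =P i) => [->|h1]; first by left.
case: (k =P i.+1) => [->|h2]; first by right; left.
by right; right.
Qed.
Lemma tau_le i n k : i < n -> k <= n -> tau i i.+1 k <= n.
Proof. case: (tauP i k) => [[? ->]|[[? ->]|[? [? ->]]]]; lia. Qed.
Lemma tau_inv i k : tau i i.+1 (tau i i.+1 k) = k.
Proof.
rewrite /tau; case: (k =P i) => [->|h1] /=.
  by case: (i.+1 =P i) => [|_]; [lia| rewrite eqxx].
case: (k =P i.+1) => [->|h2] /=; first by rewrite eqxx.
by case: (k =P i) => //; case: (k =P i.+1).
Qed.

Lemma inv_swap s i : 1 <= i -> i < size s ->
  inversions (swap_pos s i i.+1) <= inversions s + 1 /\
  (~~ (xat s i < xat s i.+1) -> inversions (swap_pos s i i.+1) <= inversions s).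
Proof.
move=> i1 iS.
set n := size s.
rewrite (@invE _ n (size_swap _ _ _)) (@invE s n) //.
set A' := [set pq : 'I_n.+1 * 'I_n.+1 | _ ].
set A := [set pq : 'I_n.+1 * 'I_n.+1 | _ ].
pose f (pq : 'I_n.+1 * 'I_n.+1) : 'I_n.+1 * 'I_n.+1 :=
  (inord (tau i i.+1 pq.1), inord (tau i i.+1 pq.2)).
pose e : 'I_n.+1 * 'I_n.+1 := (inord i, inord i.+1).
have key : forall pq, pq \in A' ->
   ((val pq.1 == i) && (val pq.2 == i.+1) && (xat s i < xat s i.+1)) || (pq \in f @: A).
  case=> [p q]; rewrite inE /= => /and3P [h1 h2 h3].
  have hp := ltn_ord p. have hq := ltn_ord q.
  rewrite !xat_swap in h3; try (apply/andP; split; lia).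
  case: (boolP ((p == i :> nat) && (q == i.+1 :> nat))) => [/andP [/eqP ep /eqP eq]|hne] /=.
    move: h3; rewrite ep eq /tau !eqxx (gtn_eqF (ltnSn i)) /= => ->.
    by [].
  apply/imsetP; exists (f (p, q)).
    rewrite inE /= !inordK; try (apply: tau_le; lia).
    rewrite h3 andbT.
    have hne' : ~ (nat_of_ord p = i /\ nat_of_ord q = i.+1).
      by move=> [e1 e2]; move: hne; rewrite e1 e2 !eqxx.
    move: hne' h1 h2.
    case: (tauP i p) => [[? ->]|[[? ->]|[? [? ->]]]];
    case: (tauP i q) => [[? ->]|[[? ->]|[? [? ->]]]]; lia.
  rewrite /f /= !inordK; try (apply: tau_le; lia).
  by rewrite !tau_inv; congr pair; apply: val_inj; rewrite /= inordK.
split.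
  have sub : A' \subset e |: (f @: A).
    apply/subsetP => pq hpq; rewrite !inE.
    case/orP: (key pq hpq) => [/andP [/andP [/eqP h1 /eqP h2] _]|->]; last by rewrite orbT.
    apply/orP; left; apply/eqP; case: pq h1 h2 {hpq} => p q /= h1 h2.
    by congr pair; apply: val_inj; rewrite /= inordK //; lia.
  apply: leq_trans (subset_leq_card sub) _.
  rewrite cardsU1; have := leq_imset_card f A; case: (e \in _) => /=; lia.
move=> hna.
have sub : A' \subset f @: A.
  apply/subsetP => pq hpq.
  case/orP: (key pq hpq) => [/andP [_ h]|//].
  by rewrite h in hna.
exact: leq_trans (subset_leq_card sub) (leq_imset_card _ _).
Qed.


Lemma dec_ex x p q : 1 <= p -> p < q -> q <= size x ->
  exists a u c v b, [/\ x = a ++ u :: c ++ v :: b,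
    swap_pos x p q = a ++ v :: c ++ u :: b, size a = p.-1, size c = (q - p).-1 &
    u = xat x p /\ v = xat x q].
Proof.
move=> h1 h2 h3.
exists (take p.-1 x), (nth 0 x p.-1), (take (q-p).-1 (drop p x)), (nth 0 x q.-1), (drop q x).
split.
- exact: decE.
- exact: swapE.
- rewrite size_takel //; lia.
- rewrite size_takel // size_drop; lia.
- by [].
Qed.

Definition fm d s := foldr minn d s.
Definition sm d s j := fm d (drop j.-1 s).

Lemma fm_cat d s t : fm d (s ++ t) = fm (fm d t) s.
Proof. by rewrite /fm foldr_cat. Qed.
Lemma fm_minn y e s : fm (minn y e) s = minn y (fm e s).
Proof. elim: s => //= z s IH; rewrite IH minnCA //. Qed.
Lemma fm_le d s y : y \in s -> fm d s <= y.
Proof.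
elim: s => //= z s IH; rewrite in_cons => /orP [/eqP ->|h]; first exact: geq_minl.
apply: leq_trans (geq_minr _ _) (IH h).
Qed.
Lemma fm_led e s : fm e s <= e.
Proof. elim: s => //= z s IH; exact: leq_trans (geq_minr _ _) IH. Qed.
Lemma fm_ge d s m : m <= d -> all (fun y => m <= y) s -> m <= fm d s.
Proof.
move=> hd; elim: s => //= z s IH /andP [hz hs]; rewrite leq_min hz; exact: IH.
Qed.

Lemma drop_cat_le (s1 s2 : seq nat) n : n <= size s1 -> drop n (s1 ++ s2) = drop n s1 ++ s2.
Proof.
move=> h; rewrite drop_cat; case: ltnP => // h'.
have -> : n = size s1 by lia.
by rewrite subnn drop0 drop_size.
Qed.
Lemma drop_cat_ge (s1 s2 : seq nat) n : size s1 <= n -> drop n (s1 ++ s2) = drop (n - size s1) s2.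
Proof.
move=> h; rewrite drop_cat; case: ltnP => // h'; lia.
Qed.

Lemma fm_body d u c v b : fm d (u :: c ++ v :: b) = minn u (minn v (fm (fm d b) c)).
Proof. by rewrite /= fm_cat /= fm_minn. Qed.

Lemma sm_left d a c b u v j : j.-1 <= size a ->
  sm d (a ++ u :: c ++ v :: b) j = sm d (a ++ v :: c ++ u :: b) j.
Proof.
move=> h; rewrite /sm !drop_cat_le // !fm_cat !fm_body; congr fm.
by rewrite minnCA.
Qed.

Lemma sm_right d a c b u v j : size a + size c + 2 <= j.-1 ->
  sm d (a ++ u :: c ++ v :: b) j = sm d (a ++ v :: c ++ u :: b) j.
Proof.
move=> h.
have e : forall u v : nat, a ++ u :: c ++ v :: b = (a ++ u :: c ++ [:: v]) ++ b.
  by move=> u' v'; rewrite -catA /= -catA.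
rewrite /sm !e !drop_cat_ge ?size_cat /= ?size_cat //=; lia.
Qed.

Lemma sm_mid d a c b u v j : size a < j.-1 <= size a + size c + 1 ->
  fm d b <= u -> fm d b <= v ->
  sm d (a ++ u :: c ++ v :: b) j = sm d (a ++ v :: c ++ u :: b) j.
Proof.
move=> h hu hv.
have e : forall u v : nat, a ++ u :: c ++ v :: b = (a ++ [:: u]) ++ c ++ v :: b.
  by move=> u' v'; rewrite -catA.
rewrite /sm !e (drop_cat_ge (a ++ [:: u])) ?(drop_cat_ge (a ++ [:: v])) ?size_cat //=; try lia.
rewrite !drop_cat_le; try lia.
rewrite !fm_cat /= !fm_minn.
have hx := fm_led (fm d b) (drop (j.-1 - (size a + 1)) c).
by rewrite !(minn_idPr _) //; apply: leq_trans hx _.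
Qed.


Lemma size_wp N w : size (word_perm N w) = N.
Proof.
elim/last_ind: w => [|w i IH]; first by rewrite /word_perm /= size_iota.
by rewrite /word_perm foldl_rcons size_swap.
Qed.

Lemma xat_iota N k : 1 <= k <= N -> xat (iota 1 N) k = k.
Proof. move=> h; rewrite /xat nth_iota; lia. Qed.

Lemma inv_iota N : inversions (iota 1 N) = 0.
Proof.
rewrite /inversions; apply/eqP; rewrite cards_eq0; apply/eqP/setP => [[p q]].
rewrite !inE /=; apply/negbTE; apply/and3P => [[h1 h2 h3]].
have hp := ltn_ord p; have hq := ltn_ord q; have Hs := size_iota 1 N.
rewrite !xat_iota in h3; lia.
Qed.

Lemma sm_iota N j : 1 <= j <= N -> sm N (iota 1 N) j = j.
Proof.
move=> hj; rewrite /sm drop_iota.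
have -> : 1 + j.-1 = j by lia.
have -> : N - j.-1 = (N - j).+1 by lia.
change (minn j (fm N (iota j.+1 (N - j))) = j).
apply/minn_idPl; apply: fm_ge; first lia.
by apply/allP => y; rewrite mem_iota; lia.
Qed.

Lemma red_F N w : all (okl N) w -> inversions (word_perm N w) <= size w /\
  (inversions (word_perm N w) = size w ->
   forall j, 1 <= j <= N -> F w j = sm N (word_perm N w) j).
Proof.
elim/last_ind: w => [|w i IH].
  move=> _; rewrite /word_perm /= inv_iota; split => // _ j hj.
  by rewrite /F /= sm_iota.
rewrite all_rcons => /andP [hi hw]; have [IH1 IH2] := IH hw.
have wpE : word_perm N (rcons w i) = swap_pos (word_perm N w) i i.+1
  by rewrite /word_perm foldl_rcons.
move: IH2; rewrite wpE size_rcons; set s := word_perm N w => IH2.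
have hs : size s = N := size_wp N w.
have IH1' : inversions s <= size w := IH1.
move: hi; rewrite /okl => /andP [i1 i2].
have hiS : i < size s by lia.
have hiS' : i.+1 <= size s by lia.
have [L1 L2] := @inv_swap s i i1 hiS.
split; first lia.
move=> heq.
have hinv : inversions s = size w by lia.
have asc : xat s i < xat s i.+1.
  by apply/negPn/negP => hna; have := L2 hna; lia.
move=> j hj.
rewrite /F foldr_rcons -/(F w (piN i j)).
have [a [u [c [v [b [Hx Hx' Ha Hc [Hu Hv]]]]]]] := @dec_ex s i i.+1 i1 (ltnSn i) hiS'.
have c0 : c = [::] by apply/size0nil; lia.
subst c.
rewrite Hx'.
case: (eqVneq j i.+1) => [ej|nj].
  subst j; rewrite /piN eqxx IH2 //; last lia.
  rewrite Hx /sm (drop_cat_ge a) ?(drop_cat_ge a); try lia.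
  have -> : i.-1 - size a = 0 by lia.
  have -> : i.+1.-1 - size a = 1 by lia.
  have huv : minn u v = u by apply/minn_idPl; rewrite Hu Hv; exact: ltnW.
  by rewrite /= /fm /= minnA huv.
have -> : piN i j = j by rewrite /piN (negbTE nj).
rewrite IH2 //.
rewrite Hx.
case: (leqP j.-1 (size a)) => h1; first exact: sm_left.
by apply: sm_right => /=; lia.
Qed.

Theorem mainTheorem12 (N : nat) (x : seq nat) (p q r : nat) :
  perm_eq x (iota 1 N) ->
  min231 x p q r ->
  phi_pi_eq N (swap_pos x p q) x /\ left_min321 (swap_pos x p q) p q r.
Proof.
move=> hperm [h231 hmin].
have hsz : size x = N by rewrite (perm_size hperm) size_iota.
have hu : uniq x by rewrite (perm_uniq hperm) iota_uniq.
move: (h231) => /and5P [p1 pq qr rN /andP [x1 x2]].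
have xinj : forall k l, 1 <= k <= size x -> 1 <= l <= size x -> xat x k = xat x l -> k = l.
  move=> k l hk hl e.
  have hk' : k.-1 < size x by lia.
  have hl' : l.-1 < size x by lia.
  have := nth_uniq 0 hk' hl' hu.
  rewrite /xat in e; rewrite e eqxx; case: eqP => // ? _; lia.
split.
  have hsm : forall j, 1 <= j <= N -> sm N (swap_pos x p q) j = sm N x j.
    have hqx : q <= size x by lia.
    have [a [u [c [v [b [Hx Hx' Ha Hc [Hu Hv]]]]]]] := @dec_ex x p q p1 pq hqx.
    have ex : x = (a ++ u :: c ++ [:: v]) ++ b by rewrite Hx -catA /= -catA.
    have spre : size (a ++ u :: c ++ [:: v]) = q by rewrite size_cat /= size_cat /=; lia.
    have hr : xat x r \in b.
      rewrite /xat ex nth_cat spre ifF; last lia.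
      apply: mem_nth; have := congr1 size ex; rewrite size_cat spre => H.
      suff : r.-1 - q < @size nat b by [].
      lia.
    move=> j hj; rewrite Hx' Hx.
    case: (leqP j.-1 (size a)) => h1; first by apply: esym; apply: sm_left.
    case: (leqP (size a + size c + 2) j.-1) => h2; first by apply: esym; apply: sm_right.
    apply: esym; apply: sm_mid; first lia.
      by apply: (leq_trans (@fm_le N b _ hr)); rewrite Hu; lia.
    by apply: (leq_trans (@fm_le N b _ hr)); rewrite Hv; lia.
  move=> w w' [Hw1 Hw2 Hw3] [Hw'1 Hw'2 Hw'3].
  have ok1 : all (okl N) w := Hw1.
  have ok2 : all (okl N) w' := Hw'1.
  have [_ R1] := @red_F N w ok1. have [_ R2] := @red_F N w' ok2.
  apply: ne_trans (@nf_F N w ok1) _.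
  apply: ne_trans (ne_sym (@nf_F N w' ok2)).
  have -> : nf (F w) N = nf (F w') N.
    apply: nf_ext => j hj.
    rewrite R1 ?Hw2 // ?R2 ?Hw'2 //; try (by rewrite Hw2 Hw3); try (by rewrite Hw'2 Hw'3); try lia.
    by apply: hsm; lia.
  exact: ne_refl.
have xs : forall k, 1 <= k <= size x -> xat (swap_pos x p q) k = xat x (tau p q k).
  by move=> k hk; apply: xat_swap.
have tp : tau p q p = q by rewrite /tau eqxx.
have tq : tau p q q = p by rewrite /tau ifF ?eqxx //; apply/eqP; lia.
have tk : forall k, k <> p -> k <> q -> tau p q k = k.
  by move=> k h1 h2; rewrite /tau ifF ?ifF //; apply/eqP.
split.
- rewrite /is321 size_swap !xs ?tp ?tq ?tk; try lia.
- move=> t /andP [t1 t2].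
  rewrite !xs ?tk; try lia.
  case: (ltngtP (xat x t) (xat x r)) => // h; last by have := xinj t r; lia.
  case: (ltngtP (xat x t) (xat x p)) => h'; last by have := xinj t p; lia.
  + have := hmin t q r; rewrite /is231.
    rewrite (_ : [&& _, _, _, _ & _] = true); last by apply/and5P; split; try lia; rewrite h; apply: ltn_trans h' x2.
    move=> /(_ isT) /orP [h3|/andP [/eqP h3 _]]; lia.
  + have := hmin p t r; rewrite /is231.
    rewrite (_ : [&& _, _, _, _ & _] = true); last by apply/and5P; split; try lia; rewrite x1 h'.
    move=> /(_ isT) /orP [h3|/andP [/eqP h3 h4]]; lia.
- move=> s /andP [s1 s2].
  rewrite !xs ?tq ?tk; try lia.
  case: (ltngtP (xat x p) (xat x s)) => // h; last by have := xinj p s; lia.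
  have := hmin p q s; rewrite /is231.
  rewrite (_ : [&& _, _, _, _ & _] = true); last by apply/and5P; split; try lia; rewrite h x2.
  move=> /(_ isT) /orP [h3|/andP [/eqP h3 h4]]; lia.
Qed.
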